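(* For each $n$, let $W\in\mathbb{R}^{n\times n}$ be a random symmetric matrix with zero diagonal whose entries $W_{ij}$, $i<j$, are independent Rademacher random variables (uniform on $\{-1,+1\}$), and let $T=-\frac{\sqrt{n}}{4}\mathrm{Id}_{n\times n}+W$. Let $\kappa>0$ be a constant independent of $n$ such that, with probability tending to $1$ as $n\to\infty$, $$\max_{\substack{S\subseteq[n]\\|S|\leq \kappa n}}\|W_S\|_{2\to2}\leq \frac{1}{8}\sqrt{n},$$ where $W_S$ is the principal submatrix of $W$ indexed by $S$. Then, with probability tending to $1$ as $n\to\infty$, $$\rho_1(T)\leq \frac{34+o(1)}{\kappa^2}\,\frac{1}{\sqrt{n}},$$ where $o(1)$ denotes a quantity tending to $0$ as $n\to\infty$.
   Context: For a self-adjoint matrix $T\in\mathbb{C}^{n\times n}$, $$\rho_1(T):=\sup\left\{\langle Tx,x\rangle:\ x\in\mathbb{C}^n,\ \|x\|_1\leq 1\right\},$$ where $\|x\|_1=\sum_i|x_i|$. $\|M\|_{2\to2}$ is the Euclidean operator norm. *)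

(* Defs.v *)
From HB Require Import structures.
From mathcomp Require Import all_boot all_order all_algebra.
From mathcomp Require Import complex.
From mathcomp Require Import all_classical all_reals all_analysis.
Set Implicit Arguments. Unset Strict Implicit. Unset Printing Implicit Defensive.
Import Order.TTheory GRing.Theory Num.Theory.
Local Open Scope ring_scope.
Local Open Scope complex_scope.

Section Defs.
Variable R : realType.

(* rho_1(T) = sup { <Tx,x> : x in C^n, ||x||_1 <= 1 }, for a real matrix T
   viewed as a complex (self-adjoint when T is symmetric) matrix.
   <Tx,x> = sum_i (Tx)_i * conj(x_i). For self-adjoint T this is real; the set
   below collects the real numbers r with r = <Tx,x>. *)
Definition rho1 (n : nat) (T : 'M[R]_n) : R :=
  sup [set r : R | exists x : 'I_n -> R[i],
         \sum_i Normc.normc (x i) <= 1 /\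
         r%:C = \sum_i (\sum_j (T i j)%:C * x j) * (x i)^*].

Definition opnorm2 (m : nat) (A : 'M[R]_m) : R :=
  sup [set r : R | exists x : 'I_m -> R[i],
         \sum_i Normc.normc (x i) ^+ 2 <= 1 /\
         r = Num.sqrt (\sum_i Normc.normc (\sum_j (A i j)%:C * x j) ^+ 2)].

Definition princ_sub (n : nat) (A : 'M[R]_n) (S : {set 'I_n}) : 'M[R]_#|S| :=
  \matrix_(i < #|S|, j < #|S|) A (enum_val i) (enum_val j).

(* Sample space: uniform random sign pattern; only entries (i,j), i<j, are used,
   so under the uniform measure the W_ij (i<j) are i.i.d. Rademacher. *)
Definition Omega (n : nat) := {ffun 'I_n * 'I_n -> bool}.

Definition sgnb (b : bool) : R := if b then 1 else -1.

Definition Wmat (n : nat) (s : Omega n) : 'M[R]_n :=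
  \matrix_(i, j) (if i == j then 0
                  else if (i < j)%N then sgnb (s (i, j)) else sgnb (s (j, i))).

Definition Tmat (n : nat) (s : Omega n) : 'M[R]_n :=
  - (Num.sqrt (n%:R) / 4)%:M + Wmat s.

Definition Prob (n : nat) (E : pred (Omega n)) : R :=
  #|[set s | E s]|%:R / #|{: Omega n}|%:R.

End Defs.

(* Main.v *)
Require Import Defs.
From HB Require Import structures.
From mathcomp Require Import all_boot all_order all_algebra.
From mathcomp Require Import complex.
From mathcomp Require Import all_classical all_reals all_analysis.
From mathcomp Require Import ring lra.
Import Order.TTheory GRing.Theory Num.Theory.
Import numFieldNormedType.Exports.
Local Open Scope classical_set_scope.
Local Open Scope ring_scope.

Module Aux.
Set Implicit Arguments. Unset Strict Implicit. Unset Printing Implicit Defensive.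
Section Aux.
Variable R : realType.
Local Open Scope complex_scope.
Local Notation Re := (@complex.Re R).
Local Notation Im := (@complex.Im R).

Lemma Re_sum (I : finType) (f : I -> R[i]) : Re (\sum_i f i) = \sum_i Re (f i).
Proof. elim/big_rec2: _ => [//|i y1 [c d] _ <-]; by case: (f i). Qed.
Lemma Im_sum (I : finType) (f : I -> R[i]) : Im (\sum_i f i) = \sum_i Im (f i).
Proof. elim/big_rec2: _ => [//|i y1 [c d] _ <-]; by case: (f i). Qed.
Lemma Re_rM (a : R) (x : R[i]) : Re (a%:C * x) = a * Re x.
Proof. by case: x => c d /=; rewrite !mul0r subr0. Qed.
Lemma Im_rM (a : R) (x : R[i]) : Im (a%:C * x) = a * Im x.
Proof. by case: x => c d /=; rewrite !mul0r addr0. Qed.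
Lemma normc_sq (x : R[i]) : Normc.normc x ^+ 2 = Re x ^+ 2 + Im x ^+ 2.
Proof. by case: x => a b /=; rewrite sqr_sqrtr // addr_ge0 // sqr_ge0. Qed.
Lemma normc_ge0 (x : R[i]) : 0 <= Normc.normc x.
Proof. by case: x => a b /=; rewrite sqrtr_ge0. Qed.
Lemma Re_conjM (x y : R[i]) : Re (x * y^*) = Re x * Re y + Im x * Im y.
Proof. by case: x => a b; case: y => c d /=; rewrite mulrN opprK. Qed.

Lemma sq_le_of_abs (p M : R) : `|p| <= M -> p ^+ 2 <= M ^+ 2.
Proof. move=> h; have h1 := ler_norm p; have h2 : - p <= `|p| by rewrite -normrN ler_norm.
have h3 := normr_ge0 p; nra. Qed.

Lemma sqrt_le1D (s : R) : 0 <= s -> Num.sqrt s <= 1 + s.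
Proof.
move=> s0; rewrite -[X in _ <= X]ger0_norm; last lra.
rewrite -sqrtr_sqr; apply: ler_wsqrtr; nra.
Qed.

Lemma le_sum_term (m : nat) (f : 'I_m -> R) j : (forall i, 0 <= f i) -> f j <= \sum_i f i.
Proof. by move=> h; rewrite (bigD1 j) //= lerDl sumr_ge0. Qed.

Lemma abs_sum_bound (m : nat) (c a : 'I_m -> R) :
  (forall j, `|a j| <= 1) -> `|\sum_j c j * a j| <= \sum_j `|c j|.
Proof.
move=> h; apply: (le_trans (ler_norm_sum _ _ _)); apply: ler_sum => j _.
by rewrite normrM ler_piMr.
Qed.

Lemma opnorm2_ge (m : nat) (A : 'M[R]_m) (x : 'I_m -> R[i]) :
  \sum_i Normc.normc (x i) ^+ 2 <= 1 ->
  Num.sqrt (\sum_i Normc.normc (\sum_j (A i j)%:C * x j) ^+ 2) <= opnorm2 A.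
Proof.
move=> hx; apply: ub_le_sup; last by exists x.
exists (1 + \sum_i 2 * (\sum_j `|A i j|) ^+ 2) => _ [y [hy ->]].
have s0 : 0 <= \sum_i Normc.normc (\sum_j (A i j)%:C * y j) ^+ 2.
  by apply: sumr_ge0 => i _; rewrite sqr_ge0.

have hs := sqrt_le1D s0.
refine (le_trans hs _); rewrite lerD2l; apply: ler_sum => i _.
have hre : forall j, `|Re (y j)| <= 1.
  move=> j; have := le_sum_term j (fun i => sqr_ge0 (Normc.normc (y i))).
  rewrite normc_sq => h; have := sqr_ge0 (Im (y j)) => h'.
  rewrite ler_norml; apply/andP; split; nra.
have him : forall j, `|Im (y j)| <= 1.
  move=> j; have := le_sum_term j (fun i => sqr_ge0 (Normc.normc (y i))).
  rewrite normc_sq => h; have := sqr_ge0 (Re (y j)) => h'.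
  rewrite ler_norml; apply/andP; split; nra.
rewrite normc_sq Re_sum Im_sum.
under eq_bigr do rewrite Re_rM.
under [X in _ + X ^+ 2]eq_bigr do rewrite Im_rM.
have := sq_le_of_abs (abs_sum_bound (A i) hre).
have := sq_le_of_abs (abs_sum_bound (A i) him).
lra.
Qed.

Definition Bf n (A : 'M[R]_n) (u v : 'I_n -> R) := \sum_i \sum_j A i j * u j * v i.
Definition Nf n (u : 'I_n -> R) := \sum_i u i ^+ 2.

Lemma Nf_ge0 n (u : 'I_n -> R) : 0 <= Nf u.
Proof. by apply: sumr_ge0 => i _; rewrite sqr_ge0. Qed.

Lemma Bf_rowE n (A : 'M[R]_n) u v : Bf A u v = \sum_i (\sum_j A i j * u j) * v i.
Proof. by apply: eq_bigr => i _; rewrite mulr_suml. Qed.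

Lemma quadA m (A : 'M[R]_m) c (u : 'I_m -> R) :
  0 < c -> opnorm2 A <= c -> `|Bf A u u| <= c * Nf u.
Proof.
move=> c0 hA.
have [N0|Npos] : Nf u = 0 \/ 0 < Nf u.
  by have := Nf_ge0 u; rewrite le_eqVlt => /orP[/eqP ->|->]; [left|right].
  have u0 : forall i, u i = 0.
    move=> i; have := psumr_eq0P (P := predT) (F := fun i => u i ^+ 2).
    move=> /(_ (fun i _ => sqr_ge0 (u i)) N0 i isT) /eqP.
    by rewrite sqrf_eq0 => /eqP.
  rewrite /Bf big1 ?normr0 ?N0 ?mulr0 // => i _; rewrite big1 // => j _.
  by rewrite !u0 !mulr0.
set N := Nf u; set k := Num.sqrt N.
have k0 : 0 < k by rewrite sqrtr_gt0.
have kN : k ^+ 2 = N by rewrite sqr_sqrtr // ltW.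
set p := fun i => \sum_j A i j * u j.
have hP : \sum_i p i ^+ 2 <= c ^+ 2 * N.
  pose x := fun i => (u i / k)%:C.
  have hx : \sum_i Normc.normc (x i) ^+ 2 <= 1.
    under eq_bigr do rewrite normc_sq /= expr0n addr0 expr_div_n.
    by rewrite -mulr_suml kN -/(Nf u) -/N divff // gt_eqF.
  have := opnorm2_ge A hx.
  under eq_bigr do rewrite normc_sq Re_sum Im_sum.
  under eq_bigr => i _.
    under eq_bigr do rewrite Re_rM /=.
    under [X in _ + X ^+ 2]eq_bigr do rewrite Im_rM /= mulr0.
    rewrite big1_eq expr0n addr0.
    under eq_bigr do rewrite mulrA.
    rewrite -mulr_suml expr_div_n kN.
    over.
  rewrite -mulr_suml => h.
  have h2 : (\sum_i p i ^+ 2) / N <= c ^+ 2.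
    have s0 : 0 <= (\sum_i p i ^+ 2) / N.
      by rewrite divr_ge0 ?(ltW Npos) // sumr_ge0 // => i _; rewrite sqr_ge0.
    rewrite -(sqr_sqrtr s0); apply: sq_le_of_abs.
    rewrite ger0_norm ?sqrtr_ge0 //; exact: le_trans h hA.
  by rewrite -ler_pdivrMr.
rewrite Bf_rowE -/p.
have key : 2 * c * \sum_i `|p i * u i| <= \sum_i p i ^+ 2 + c ^+ 2 * N.
  rewrite mulr_sumr /N /Nf mulr_sumr -big_split /=; apply: ler_sum => i _.
  rewrite normrM.
  have e1 : p i ^+ 2 = `|p i| ^+ 2 by rewrite -normrX ger0_norm // sqr_ge0.
  have e2 : u i ^+ 2 = `|u i| ^+ 2 by rewrite -normrX ger0_norm // sqr_ge0.
  rewrite e1 e2; have := sqr_ge0 (`|p i| - c * `|u i|); nra.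
have hs : \sum_i `|p i * u i| <= c * N.
  have : 2 * c * \sum_i `|p i * u i| <= 2 * c * (c * N) by lra.
  by rewrite ler_pM2l // mulr_gt0.
exact: (le_trans (ler_norm_sum _ _ _) hs).
Qed.

Lemma sum_on n (S : {set 'I_n}) (F : 'I_n -> R) :
  (forall i, i \notin S -> F i = 0) -> \sum_i F i = \sum_(k < #|S|) F (enum_val k).
Proof.
move=> h; rewrite -big_enum_val [RHS]big_mkcond /=; apply: eq_bigr => i _.
by case: ifP => // /negbT /h.
Qed.

Lemma quadS n (A : 'M[R]_n) (S : {set 'I_n}) c (u : 'I_n -> R) :
  0 < c -> opnorm2 (princ_sub A S) <= c -> (forall i, i \notin S -> u i = 0) ->
  `|Bf A u u| <= c * Nf u.
Proof.
move=> c0 hA hu.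
pose u' := fun k : 'I_#|S| => u (enum_val k).
have := quadA u' c0 hA.
have -> : Nf u' = Nf u.
  by rewrite /Nf (sum_on (S := S)) // => i /hu ->; rewrite expr0n.
suff -> : Bf (princ_sub A S) u' u' = Bf A u u by [].
rewrite /Bf (sum_on (S := S) (F := fun i => \sum_j A i j * u j * u i)); last first.
  by move=> i /hu ->; rewrite big1 // => j _; rewrite mulr0.
apply: eq_bigr => k _.
rewrite (sum_on (S := S) (F := fun j => A (enum_val k) j * u j * u (enum_val k))); last first.
  by move=> j /hu ->; rewrite mulr0 mul0r.
by apply: eq_bigr => l _; rewrite /princ_sub mxE.
Qed.

Section Bil.
Variable n : nat.
Implicit Types (A : 'M[R]_n) (u v : 'I_n -> R).

Lemma Bf_ext A u u' v v' : (forall i, u i = u' i) -> (forall i, v i = v' i) ->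
  Bf A u v = Bf A u' v'.
Proof.
by move=> hu hv; apply: eq_bigr => i _; apply: eq_bigr => j _; rewrite hu hv.
Qed.

Lemma Bf_addl A u u' v : Bf A (fun i => u i + u' i) v = Bf A u v + Bf A u' v.
Proof.
rewrite /Bf -big_split; apply: eq_bigr => i _; rewrite -big_split.
by apply: eq_bigr => j _ /=; rewrite mulrDr mulrDl.
Qed.

Lemma Bf_scalel A a u v : Bf A (fun i => a * u i) v = a * Bf A u v.
Proof.
rewrite /Bf mulr_sumr; apply: eq_bigr => i _; rewrite mulr_sumr.
by apply: eq_bigr => j _; rewrite mulrCA !mulrA.
Qed.

Lemma Bf_suml A m (f : 'I_m -> 'I_n -> R) v :
  Bf A (fun i => \sum_k f k i) v = \sum_k Bf A (f k) v.
Proof.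
transitivity (\sum_i \sum_j \sum_k A i j * f k j * v i).
  by apply: eq_bigr => i _; apply: eq_bigr => j _; rewrite mulr_sumr mulr_suml.
under eq_bigr do rewrite exchange_big.
by rewrite exchange_big.
Qed.

Lemma Bf_sym A u v : (forall i j, A i j = A j i) -> Bf A u v = Bf A v u.
Proof.
move=> hA; rewrite /Bf exchange_big; apply: eq_bigr => i _; apply: eq_bigr => j _.
by rewrite hA mulrAC.
Qed.

Lemma Nf_scale a u : Nf (fun i => a * u i) = a ^+ 2 * Nf u.
Proof. by rewrite /Nf mulr_sumr; apply: eq_bigr => i _; rewrite exprMn. Qed.

Lemma Nf_add_le u v : Nf (fun i => u i + v i) <= 2 * Nf u + 2 * Nf v.
Proof.
rewrite /Nf !mulr_sumr -big_split; apply: ler_sum => i _ /=.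
have := sqr_ge0 (u i - v i); nra.
Qed.

Definition supp (u : 'I_n -> R) (U : {set 'I_n}) := forall i, i \notin U -> u i = 0.

Variables (A : 'M[R]_n) (c K : R).
Hypothesis c0 : 0 <= c.
Hypothesis Asym : forall i j, A i j = A j i.
Hypothesis Hq : forall (U : {set 'I_n}) u, #|U|%:R <= K -> supp u U ->
  `|Bf A u u| <= c * Nf u.

Lemma pair_bound (U1 U2 : {set 'I_n}) u v :
  #|U1 :|: U2|%:R <= K -> supp u U1 -> supp v U2 ->
  2 * Bf A u v <= 3 * c * (Nf u + Nf v).
Proof.
move=> hK hu hv.
have k1 : #|U1|%:R <= K.
  by apply: le_trans hK; rewrite ler_nat subset_leq_card // finset.subsetUl.
have k2 : #|U2|%:R <= K.
  by apply: le_trans hK; rewrite ler_nat subset_leq_card // finset.subsetUr.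
have huv : supp (fun i => u i + v i) (U1 :|: U2).
  move=> i; rewrite finset.in_setU negb_or => /andP[/hu -> /hv ->]; exact: addr0.
have e : Bf A (fun i => u i + v i) (fun i => u i + v i) =
   Bf A u u + 2 * Bf A u v + Bf A v v.
  rewrite Bf_addl (Bf_sym _ _ Asym) Bf_addl (Bf_sym u _ Asym).
  rewrite (Bf_sym v (fun i => u i + v i) Asym) Bf_addl (Bf_sym v u Asym).
  by rewrite mulr2n mulrDl mul1r; ring.
have h1 := Hq hK huv; have h2 := Hq k1 hu; have h3 := Hq k2 hv.
have h4 := Nf_add_le u v.
rewrite e in h1.
move: h1 h2 h3; rewrite !ler_norml => /andP[a1 a2] /andP[b1 b2] /andP[d1 d2].
have : c * Nf (fun i => u i + v i) <= c * (2 * Nf u + 2 * Nf v) by rewrite ler_wpM2l.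
lra.
Qed.

Lemma pair_bound_scaled (U1 U2 : {set 'I_n}) u v (l : R) : 0 < l ->
  #|U1 :|: U2|%:R <= K -> supp u U1 -> supp v U2 ->
  2 * Bf A u v <= 3 * c * (l * Nf u + Nf v / l).
Proof.
move=> l0 hK hu hv.
have hu' : supp (fun i => l * u i) U1 by move=> i /hu ->; rewrite mulr0.
have := pair_bound hK hu' hv; rewrite Bf_scalel Nf_scale => h.
rewrite -(ler_pM2l l0).
have -> : l * (3 * c * (l * Nf u + Nf v / l)) = 3 * c * (l ^+ 2 * Nf u + Nf v).
  by field; rewrite gt_eqF.
by apply: le_trans h; rewrite le_eqVlt; apply/orP; left; apply/eqP; ring.
Qed.

Lemma sum_constm m (a : R) : \sum_(k < m) a = a * m%:R.
Proof. by rewrite sumr_const card_ord mulr_natr. Qed.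

Lemma core m (w y : 'I_n -> R) (z : 'I_m -> 'I_n -> R) :
  (0 < m)%N ->
  (forall i, w i = y i + \sum_k z k i) ->
  Nf w = Nf y + \sum_k Nf (z k) ->
  Bf A y y <= c * Nf y ->
  (forall k, 2 * Bf A y (z k) <=
     3 * c * ((3 * m%:R)^-1 * Nf y + Nf (z k) / (3 * m%:R)^-1)) ->
  (forall k l, 2 * Bf A (z k) (z l) <= 3 * c * (Nf (z k) + Nf (z l))) ->
  Bf A w w - 2 * c * Nf w <= 12 * c * m%:R * \sum_k Nf (z k).
Proof.
move=> m0 hw hN hyy hyz hzz.
set zs := fun i => \sum_k z k i.
set Z := \sum_k Nf (z k).
have Z0 : 0 <= Z by apply: sumr_ge0 => k _; exact: Nf_ge0.
have Y0 := Nf_ge0 y.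
have m0' : 0 < m%:R :> R by rewrite ltr0n.
have eB : Bf A w w = Bf A y y + 2 * Bf A y zs + Bf A zs zs.
  have -> : Bf A w w = Bf A (fun i => y i + zs i) (fun i => y i + zs i) by apply: Bf_ext.
  rewrite Bf_addl (Bf_sym _ _ Asym) Bf_addl (Bf_sym y _ Asym).
  rewrite (Bf_sym zs (fun i => y i + zs i) Asym) Bf_addl (Bf_sym zs y Asym).
  by rewrite mulr2n mulrDl mul1r; ring.
have eyz : 2 * Bf A y zs = \sum_k 2 * Bf A y (z k).
  by rewrite (Bf_sym _ _ Asym) Bf_suml mulr_sumr; apply: eq_bigr => k _; rewrite (Bf_sym _ _ Asym).
have ezz : 2 * Bf A zs zs = \sum_k \sum_l 2 * Bf A (z k) (z l).
  rewrite Bf_suml mulr_sumr; apply: eq_bigr => k _.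
  by rewrite (Bf_sym _ _ Asym) Bf_suml mulr_sumr; apply: eq_bigr => l _; rewrite (Bf_sym _ _ Asym).
have hyz' : 2 * Bf A y zs <= c * Nf y + 9 * c * m%:R * Z.
  rewrite eyz; apply: le_trans (ler_sum _ (fun k _ => hyz k)) _.
  rewrite -mulr_sumr big_split /= sumr_const card_ord -mulr_suml -/Z.
  rewrite invrK -mulr_natr le_eqVlt; apply/orP; left; apply/eqP.
  by field; rewrite gt_eqF.
have hzz' : 2 * Bf A zs zs <= 6 * c * m%:R * Z.
  rewrite ezz; apply: le_trans (ler_sum _ (fun k _ => ler_sum _ (fun l _ => hzz k l))) _.
  under eq_bigr do rewrite -mulr_sumr big_split /= sum_constm -/Z.
  rewrite -mulr_sumr big_split /= sum_constm -mulr_suml -/Z.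
  rewrite le_eqVlt; apply/orP; left; apply/eqP; ring.
rewrite eB hN -/Z.
have : 0 <= c * Z by rewrite mulr_ge0.
have : 0 <= c * m%:R * Z by rewrite !mulr_ge0 // ltW.
move=> *; lra.
Qed.

Lemma cardU_le (U1 U2 : {set 'I_n}) (K2 : R) :
  #|U1|%:R <= K2 -> #|U2|%:R <= K2 -> #|U1 :|: U2|%:R <= K2 + K2.
Proof.
move=> h1 h2; have h3 := lerD h1 h2; refine (le_trans _ h3); rewrite -natrD ler_nat.
by rewrite cardsU leq_subr.
Qed.

Lemma sum_blk m (blk : 'I_n -> 'I_m) (S : {set 'I_n}) i (F : R) :
  \sum_k (if (i \notin S) && (blk i == k) then F else 0) = if i \in S then 0 else F.
Proof.
case: (i \in S) => /=; first by rewrite big1.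
rewrite (bigD1 (blk i)) //= eqxx big1 ?addr0 // => k /negbTE.
by rewrite eq_sym => ->.
Qed.

Lemma decomp (S : {set 'I_n}) m (blk : 'I_n -> 'I_m) : (0 < m)%N ->
  #|S|%:R <= K / 2 -> (forall k, #|[set i | blk i == k]%SET|%:R <= K / 2) ->
  forall w : 'I_n -> R,
  Bf A w w - 2 * c * Nf w <= 12 * c * m%:R * \sum_i (if i \in S then 0 else w i ^+ 2).
Proof.
move=> m0 hS hB w.
have K0 : 0 <= K / 2 by refine (le_trans _ hS); rewrite ler0n.
have hSK : #|S|%:R <= K by refine (le_trans hS _); lra.
pose y := fun i => if i \in S then w i else 0.
pose z := fun (k : 'I_m) i => if (i \notin S) && (blk i == k) then w i else 0.
have hZ : \sum_k Nf (z k) = \sum_i (if i \in S then 0 else w i ^+ 2).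
  rewrite /Nf exchange_big /=; apply: eq_bigr => i _.
  rewrite -(sum_blk blk S i); apply: eq_bigr => k _.
  by rewrite /z; case: ifP => //; rewrite expr0n.
rewrite -hZ; apply: (core (w := w) (y := y) (z := z)) => //.
- move=> i; rewrite (sum_blk blk S i (w i)) /y /=.
  by case: (i \in S); rewrite ?addr0 ?add0r.
- rewrite hZ /Nf -big_split /=; apply: eq_bigr => i _; rewrite /y.
  by case: (i \in S); rewrite ?expr0n ?addr0 ?add0r.
- have hy : supp y S by move=> i /negbTE; rewrite /y => ->.
  by have := Hq hSK hy; rewrite ler_norml => /andP[].
- move=> k; apply: (pair_bound_scaled (U1 := S) (U2 := [set i | blk i == k]%SET)).
  + by rewrite invr_gt0 mulr_gt0 // ltr0n.
  + by have := cardU_le hS (hB k); rewrite -splitr.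
  + by move=> i /negbTE; rewrite /y => ->.
  + by move=> i; rewrite inE /z => /negbTE ->; rewrite andbF.
- move=> k l; apply: (pair_bound (U1 := [set i | blk i == k]%SET) (U2 := [set i | blk i == l]%SET)).
  + by have := cardU_le (hB k) (hB l); rewrite -splitr.
  + by move=> i; rewrite inE /z => /negbTE ->; rewrite andbF.
  + by move=> i; rewrite inE /z => /negbTE ->; rewrite andbF.
Qed.

End Bil.

Lemma Wsym n (s : Omega n) : forall i j, Wmat R s i j = Wmat R s j i.
Proof.
move=> i j; rewrite !mxE [j == i]eq_sym; case: eqVneq => // hne.
case: ltngtP => // h; move: hne; by rewrite (val_inj h) eqxx.
Qed.

Lemma Bf_shift n (a : R) (A : 'M[R]_n) u :
  Bf (- a%:M + A) u u = Bf A u u - a * Nf u.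
Proof.
rewrite /Bf /Nf mulr_sumr -sumrB; apply: eq_bigr => i _.
under eq_bigr do rewrite !mxE mulrDl mulrDl.
rewrite big_split /= (bigD1 i) //= eqxx mulr1n big1 ?addr0; first by ring.
by move=> j /negbTE; rewrite eq_sym => ->; rewrite mulr0n oppr0 !mul0r.
Qed.

Lemma rho1_elem n (T : 'M[R]_n) (x : 'I_n -> R[i]) (r : R) :
  r%:C = \sum_i (\sum_j (T i j)%:C * x j) * (x i)^* ->
  r = Bf T (fun i => Re (x i)) (fun i => Re (x i)) + Bf T (fun i => Im (x i)) (fun i => Im (x i)).
Proof.
move=> h; have := congr1 (@complex.Re R) h; rewrite /= Re_sum => ->.
rewrite !Bf_rowE -big_split /=; apply: eq_bigr => i _.
rewrite Re_conjM Re_sum Im_sum.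
by congr (_ * _ + _ * _); apply: eq_bigr => j _; rewrite ?Re_rM ?Im_rM.
Qed.

Lemma det_main (kappa : R) (n : nat) (s : Omega n) :
  0 < kappa -> (kappa < 1 -> 4 <= kappa * n%:R) -> (1 <= n)%N ->
  [forall S : {set 'I_n},
        (#|S|%:R <= kappa * n%:R) ==>
        (opnorm2 (princ_sub (Wmat R s) S) <= Num.sqrt (n%:R) / 8)] ->
  rho1 (Tmat R s) <= (34 + 0) / kappa ^+ 2 / Num.sqrt (n%:R).
Proof.
move=> k0 hkn n1 hall.
set q := Num.sqrt n%:R.
have q0 : 0 < q by rewrite sqrtr_gt0 ltr0n.
have qq : q ^+ 2 = n%:R by rewrite sqr_sqrtr // ler0n.
set c := q / 8.
have c0 : 0 < c by rewrite divr_gt0.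
set W := Wmat R s.
have Hq : forall (U : {set 'I_n}) u, #|U|%:R <= kappa * n%:R -> supp u U ->
    `|Bf W u u| <= c * Nf u.
  move=> U u hU hu; apply: (quadS (S := U)) => //.
  by move/forallP: hall => /(_ U) /implyP /(_ hU).
have Tsh : forall u, Bf (Tmat R s) u u = Bf W u u - 2 * c * Nf u.
  by move=> u; rewrite /Tmat Bf_shift /c /q /W; field.
have bnd0 : 0 <= (34 + 0) / kappa ^+ 2 / q.
  by rewrite !divr_ge0 // ?sqrtr_ge0 ?sqr_ge0.
apply: ge_sup.
  exists 0, (fun=> 0); split.
    by rewrite big1 ?ler01 // => i _; exact: Normc.normc0.
  by rewrite big1 // => i _; rewrite big1 ?mul0r // => j _; rewrite mulr0.
move=> r [x [hx hr]]; rewrite (rho1_elem hr) !Tsh.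
set a := fun i => Re (x i); set b' := fun i => Im (x i).
case: (lerP 1 kappa) => hk.
  have hT : #|[set: 'I_n]%SET|%:R <= kappa * n%:R.
    rewrite cardsT card_ord; have : 0 <= n%:R :> R by rewrite ler0n.
    nra.
  have hsT : forall u : 'I_n -> R, supp u [set: 'I_n]%SET.
    by move=> u i; rewrite inE.
  have := Hq _ _ hT (hsT a); have := Hq _ _ hT (hsT b').
  rewrite !ler_norml => /andP[_ h1] /andP[_ h2].
  have := Nf_ge0 a; have := Nf_ge0 b'.
  move=> *; apply: le_trans bnd0; nra.
have {hkn} hkn := hkn hk.
have nR0 : 0 < n%:R :> R by rewrite ltr0n.
set K := kappa * n%:R.
have K0 : 0 < K by rewrite mulr_gt0.
set t := 2 / K.
have t0 : 0 < t by rewrite divr_gt0.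
pose S := [set i | t < Normc.normc (x i)]%SET.
have hS : #|S|%:R <= K / 2.
  have h1 : #|S|%:R * t <= 1.
    apply: le_trans hx.
    have -> : #|S|%:R * t = \sum_(i in S) t by rewrite sumr_const mulr_natl.
    apply: le_trans (_ : \sum_(i in S) Normc.normc (x i) <= _).
      by apply: ler_sum => i; rewrite inE => /ltW.
    rewrite [X in _ <= X](bigID (mem S)) /= lerDl.
    by apply: sumr_ge0 => i _; exact: normc_ge0.
  have : #|S|%:R * 2 <= K by move: h1; rewrite /t mulrA ler_pdivrMr // mul1r.
  rewrite ler_pdivlMr //.
have hZ : \sum_i (if i \in S then 0 else a i ^+ 2) +
          \sum_i (if i \in S then 0 else b' i ^+ 2) <= t.
  rewrite -big_split /=.
  apply: le_trans (_ : _ <= \sum_i t * Normc.normc (x i)) _; last first.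
    by rewrite -mulr_sumr -[X in _ <= X]mulr1 ler_wpM2l // ltW.
  apply: ler_sum => i _; have n0 := normc_ge0 (x i).
  case: ifP => hi; first by rewrite addr0 mulr_ge0 // ltW.
  have : Normc.normc (x i) <= t by move: hi; rewrite inE => /negbT; rewrite -leNgt.
  have := normc_sq (x i); rewrite /a /b' => <-; nra.
pose bb := Num.truncn (K / 2).
have hb1 : bb%:R <= K / 2 by rewrite truncn_le divr_ge0 // ltW.
have hb2 : K / 2 < bb%:R + 1.
  have := truncnS_gt (K / 2); move=> h; apply: (lt_le_trans h); by rewrite mulrSr.
have hK4 : 4 <= K := hkn.
have hb3 : K / 4 <= bb%:R by lra.
have b0 : (0 < bb)%N by rewrite -(ltr0n R); lra.
pose m := (n %/ bb).+1.
have blk_lt : forall i : 'I_n, (i %/ bb < m)%N.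
  by move=> i; rewrite ltnS leq_div2r // ltnW.
pose blk := fun i : 'I_n => (Ordinal (blk_lt i) : 'I_m).
have hB : forall k, #|[set i | blk i == k]%SET|%:R <= K / 2.
  move=> k; apply: le_trans hb1; rewrite ler_nat.
  have := @leq_card_in _ _ (fun i : 'I_n => (Ordinal (ltn_pmod i b0) : 'I_bb))
     [set i | blk i == k]%SET.
  rewrite card_ord; apply => i j; rewrite !inE => /eqP hi /eqP hj [hmod].
  apply: val_inj; rewrite /= (divn_eq i bb) (divn_eq j bb) hmod.
  have : blk i = blk j by rewrite hi hj.
  by move=> /(congr1 val) /= ->.
have D := fun w => decomp (A := W) (c := c) (K := K) (ltW c0) (@Wsym n s) Hq
   (S := S) (blk := blk) (ltn0Sn _) hS hB w.
have Da := D a; have Db := D b'.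
have cm0 : 0 <= 12 * c * m%:R by rewrite !mulr_ge0 // ltW.
have hr1 : Bf W a a - 2 * c * Nf a + (Bf W b' b' - 2 * c * Nf b') <= 12 * c * m%:R * t.
  apply: le_trans (lerD Da Db) _; rewrite -mulrDr; exact: ler_wpM2l.
apply: le_trans hr1 _.
pose d := (n %/ bb)%:R : R.
have d0 : 0 <= d by rewrite ler0n.
have hdb : d * bb%:R <= n%:R by rewrite -natrM ler_nat leq_trunc_div.
have hdk : d * kappa <= 4.
  have h4 : d * K <= 4 * n%:R.
    have : d * K <= d * (4 * bb%:R) by rewrite ler_wpM2l //; lra.
    move=> h; apply: le_trans h _; nra.
  rewrite /K mulrA in h4; rewrite -(ler_pM2r nR0); exact: h4.
have hm : m%:R = d + 1 by rewrite /m -addn1 natrD.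
have -> : 12 * c * m%:R * t = (3 * (m%:R * kappa)) / (kappa ^+ 2 * q).
  rewrite /c /t /K -qq; field.
  by rewrite !gt_eqF.
have -> : (34 + 0) / kappa ^+ 2 / q = 34 / (kappa ^+ 2 * q).
  by field; rewrite !gt_eqF.
rewrite ler_pM2r ?invr_gt0 ?mulr_gt0 ?exprn_gt0 //.
rewrite hm; lra.
Qed.
End Aux.

End Aux.
Import Aux.

Lemma Prob_le (R : realType) n (E1 E2 : pred (Omega n)) :
  (forall s, E1 s -> E2 s) -> Prob R E1 <= Prob R E2.
Proof.
move=> h; have c0 : (0 < #|{: Omega n}|)%N by apply/card_gt0P; exists [ffun=> true].
rewrite /Prob ler_pM2r ?invr_gt0 ?ltr0n //.
rewrite ler_nat; apply: subset_leq_card; apply/fintype.subsetP => x; rewrite !inE; exact: h.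
Qed.

Lemma Prob_le1 (R : realType) n (E : pred (Omega n)) : Prob R E <= 1.
Proof.
have c0 : (0 < #|{: Omega n}|)%N by apply/card_gt0P; exists [ffun=> true].
by rewrite /Prob ler_pdivrMr ?mul1r ?ltr0n ?ler_nat ?max_card.
Qed.

Theorem lemma3 (R : realType) (kappa : R) :
  0 < kappa ->
  (fun n : nat => Prob R (fun s : Omega n =>
      [forall S : {set 'I_n},
        (#|S|%:R <= kappa * n%:R) ==>
        (opnorm2 (princ_sub (Wmat R s) S) <= Num.sqrt (n%:R) / 8)]))
    @ \oo --> (1 : R) ->
  exists eps : nat -> R,
    eps @ \oo --> (0 : R) /\
    (fun n : nat => Prob R (fun s : Omega n =>
        rho1 (Tmat R s) <= (34 + eps n) / kappa ^+ 2 / Num.sqrt (n%:R)))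
      @ \oo --> (1 : R).
Proof.
move=> k0 H; exists (fun=> 0); split; first exact: cvg_cst.
have [N HN] : exists N : nat, 4 / kappa <= N%:R.
  exists (Num.truncn (4 / kappa)).+1; exact/ltW/truncnS_gt.
apply: (@squeeze_cvgr _ _ _ R _ (fun=> 1) _ _ _ H (cvg_cst (1:R)));
rewrite /=.
near=> n.
have n1 : (0 < n)%N by near: n; exists 1%N.
have nN : (N <= n)%N by near: n; exists N.
rewrite Prob_le1 andbT; apply: Prob_le => s hs.
apply: (@det_main R) => // _.
rewrite -ler_pdivrMl // mulrC; apply: (le_trans HN); by rewrite ler_nat.
Unshelve. all: end_near. Qed.
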